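(* Let $c\in[\frac12,1)$ and let $d,\delta$ be positive integers with $d\ge\delta$. Let $G$ be a graph with maximum degree $\delta$ and $w:V(G)\to[0,1]$ a weight function with $w(V(G))=1$, and assume $G$ has no $d$-bounded $(w,c)$-balanced separator. Then for every $v\in V(G)$ the canonical star separation for $v$ is unique (i.e. $G\setminus N[v]$ has a unique connected component of largest weight).
   Context: For $X\subseteq V(G)$, $w(X)=\sum_{x\in X}w(x)$; $N(v)$ is the neighborhood of $v$, $N[v]=N(v)\cup\{v\}$; $N^d[v]$ is the set of vertices at distance at most $d$ from $v$. A set $X$ is $d$-bounded if $X\subseteq N^d[v]$ for some $v\in V(G)$. A set $X\subseteq V(G)$ is a $(w,c)$-balanced separator if every connected component $D$ of $G\setminus X$ satisfies $w(D)\le c$. A canonical star separation for $v$ is a triple $S_v=(A_v,C_v,B_v)$ where $B_v$ is a largest-weight connected component of $G\setminus N[v]$, $C_v$ consists of $v$ together with every vertex of $N(v)$ having a neighbor in $B_v$, and $A_v=V(G)\setminus(B_v\cup C_v)$. *)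

(* Defs.v *)
From HB Require Import structures.
From mathcomp Require Import all_boot all_order all_algebra.
Set Implicit Arguments. Unset Strict Implicit. Unset Printing Implicit Defensive.
Import Order.TTheory GRing.Theory Num.Theory.
Local Open Scope ring_scope.

Definition simple_graph (T : finType) (e : rel T) : Prop :=
  symmetric e /\ irreflexive e.

Definition wt (R : numDomainType) (T : finType) (w : T -> R) (X : {set T}) : R :=
  \sum_(x in X) w x.

Definition nbhd (T : finType) (e : rel T) (v : T) : {set T} := [set u | e v u].
Definition cnbhd (T : finType) (e : rel T) (v : T) : {set T} := v |: nbhd e v.

Definition degree (T : finType) (e : rel T) (v : T) : nat := #|nbhd e v|.

Definition max_degree_eq (T : finType) (e : rel T) (delta : nat) : Prop :=
  (forall v, (degree e v <= delta)%N) /\ exists v, degree e v = delta.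

Fixpoint ball (T : finType) (e : rel T) (v : T) (k : nat) : {set T} :=
  match k with
  | 0 => [set v]
  | k'.+1 => ball e v k' :|: [set u | [exists x in ball e v k', e x u]]
  end.

Definition d_bounded (T : finType) (e : rel T) (d : nat) (X : {set T}) : Prop :=
  exists v, X \subset ball e v d.

Definition del_rel (T : finType) (e : rel T) (X : {set T}) : rel T :=
  [rel x y | [&& e x y, x \notin X & y \notin X]].

Definition comp_of (T : finType) (e : rel T) (X : {set T}) (x : T) : {set T} :=
  [set y | (y \notin X) && connect (del_rel e X) x y].

Definition is_component (T : finType) (e : rel T) (X : {set T}) (D : {set T}) : Prop :=
  exists2 x, x \notin X & D = comp_of e X x.

Definition balanced_sep (R : numDomainType) (T : finType) (e : rel T) (w : T -> R)
  (c : R) (X : {set T}) : Prop :=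
  forall D, is_component e X D -> wt w D <= c.

(* Main.v *)
Require Import Defs.
From HB Require Import structures.
From mathcomp Require Import all_boot all_order all_algebra.
From mathcomp Require Import lra.
From Stdlib Require Import Classical.
Import Order.TTheory GRing.Theory Num.Theory.
Local Open Scope ring_scope.

Lemma ball_mono (T : finType) (e : rel T) v k : ball e v k \subset ball e v k.+1.
Proof. by rewrite /= subsetUl. Qed.

Lemma ball_mono2 (T : finType) (e : rel T) v k m : (k <= m)%N ->
  ball e v k \subset ball e v m.
Proof.
elim: m => [|m IH]; first by rewrite leqn0 => /eqP ->.
rewrite leq_eqVlt => /orP [/eqP -> //|]; rewrite ltnS => /IH h.
by apply/subsetP => x /(subsetP h) hx; rewrite /= inE hx.
Qed.

Lemma comp_disj (T : finType) (e : rel T) X D D' : symmetric e ->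
  is_component e X D -> is_component e X D' -> D != D' -> [disjoint D & D'].
Proof.
move=> es [x hx ->] [y hy ->] neq.
have sy : connect_sym (del_rel e X).
  apply: sym_connect_sym => a b; rewrite /del_rel /= (es a b); by case: (e b a); case: (a \in X); case: (b \in X).
apply/pred0P => z /=; apply/negP => /andP [].
rewrite !inE => /andP [hz cxz] /andP [_ cyz].
move: neq; rewrite -[_ != _]/(~~ _) => /negP; apply; apply/eqP/setP => u.
rewrite !inE; apply: andb_id2l => _; apply/idP/idP => h.
- apply: connect_trans h; apply: connect_trans cyz _; by rewrite sy.
- apply: connect_trans h; apply: connect_trans cxz _; by rewrite sy.
Qed.

Theorem lemma4p1 (R : realFieldType) (c : R) (d delta : nat)
  (T : finType) (e : rel T) (w : T -> R) :
  1 / 2 <= c -> c < 1 ->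
  (0 < d)%N -> (0 < delta)%N -> (delta <= d)%N ->
  simple_graph e ->
  max_degree_eq e delta ->
  (forall x, 0 <= w x <= 1) ->
  wt w [set: T] = 1 ->
  ~ (exists X : {set T}, d_bounded e d X /\ balanced_sep e w c X) ->
  forall v : T,
    exists2 B : {set T}, is_component e (cnbhd e v) B &
      forall D : {set T}, is_component e (cnbhd e v) D -> D != B ->
        wt w D < wt w B.
Proof.
move=> hc hc1 d0 _ _ [es _] _ w01 wT nosep v.
set X := cnbhd e v.
have w0 : forall x, 0 <= w x by move=> x; case/andP: (w01 x).
have sum2 : forall D D', is_component e X D -> is_component e X D' -> D != D' ->
    wt w D + wt w D' <= 1.
  move=> D D' hD hD' neq.
  rewrite /wt -bigU /=; last exact: comp_disj hD hD' neq.
  rewrite -wT /wt (big_setID (D :|: D')) /= setTI.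
  have -> : \sum_(i in [predU D & D']) w i = \sum_(i in D :|: D') w i.
    by apply: eq_bigl => i; rewrite !inE.
  rewrite lerDl.
  by apply: sumr_ge0 => i _.
case: (classic (exists D, is_component e X D /\ c < wt w D)) => [[D [hD hc2]]|H].
  exists D => // D' hD' neq.
  have neq' : D != D' by rewrite eq_sym.
  have := sum2 _ _ hD hD' neq'.
  move=> h; lra.
exfalso; apply: nosep; exists X; split.
  exists v; apply/subsetP => u hu; apply: (subsetP (ball_mono2 _ e v 1 d d0)); move: hu. rewrite !inE => /orP [->//|hu].
  apply/orP; right; apply/existsP; exists v; by rewrite inE eqxx.
move=> D hD; rewrite leNgt; apply/negP => h; apply: H; by exists D.
Qed.
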